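(* Let $R$ be an integral domain and let $A=\mathrm{diag}(\lambda_1,\dots,\lambda_n)\in R^{n\times n}$ be a diagonal matrix. If $A+tI$ has a Smith form over $R[t]$, then every nonzero difference $\lambda_i-\lambda_j$ is a unit of $R$. In particular, for $R=\mathbb{Z}$, a diagonal matrix $A\in\mathbb{Z}^{n\times n}$ has the property that $A+tI$ has a Smith form over $\mathbb{Z}[t]$ if and only if its diagonal entries take at most two distinct values, and, when there are two, they differ by $1$.
   Context: A matrix over a commutative ring $S$ is in Smith form if it is diagonal with diagonal entries $s_1,s_2,\dots$ such that $s_i\mid s_{i+1}$ in $S$; a matrix $B$ has a Smith form over $S$ if $PBQ$ is in Smith form for some invertible matrices $P,Q$ over $S$. *)

(* Defs.v *)
From HB Require Import structures.
From mathcomp Require Import all_boot all_order all_algebra.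
Set Implicit Arguments. Unset Strict Implicit. Unset Printing Implicit Defensive.
Import GRing.Theory.
Local Open Scope ring_scope.

Definition dvdr (S : comUnitRingType) (a b : S) : Prop := exists c : S, b = c * a.

Definition smith_form (S : comUnitRingType) (n : nat) (B : 'M[S]_n) : Prop :=
  (forall i j : 'I_n, i != j -> B i j = 0) /\
  (forall i j : 'I_n, nat_of_ord j = (nat_of_ord i).+1 -> dvdr (B i i) (B j j)).

Definition has_smith_form (S : comUnitRingType) (n : nat) (B : 'M[S]_n) : Prop :=
  exists P Q : 'M[S]_n, P \in unitmx /\ Q \in unitmx /\ smith_form (P *m B *m Q).

Definition diag_plus_tI (R : idomainType) (n : nat) (lam : 'rV[R]_n) : 'M[{poly R}]_n :=
  map_mx polyC (diag_mx lam) + 'X%:M.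

(* Main.v *)
Require Import Defs.
From HB Require Import structures.
From mathcomp Require Import all_boot all_order all_algebra all_fingroup.
From mathcomp Require Import ring zify.
From Stdlib Require Import Lia.
Import GRing.Theory.
Local Open Scope ring_scope.
Set Implicit Arguments. Unset Strict Implicit.

Lemma hornerXaddC (R : comNzRingType) (a x : R) : ('X + a%:P).[x] = x + a.
Proof. by rewrite hornerD hornerX hornerC. Qed.

Lemma diag_plus_tIE (R : idomainType) n (lam : 'rV[R]_n) :
  diag_plus_tI lam = diag_mx (\row_k ('X + (lam 0 k)%:P)).
Proof.
apply/matrixP => i j; rewrite !mxE; case: eqP => [->|_]; rewrite ?polyC0 ?addr0 //.
by rewrite addrC.
Qed.

Lemma smith_diag (S : comUnitRingType) n (D : 'M[S]_n) :
  smith_form D -> D = diag_mx (\row_k D k k).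
Proof.
case=> H _; apply/matrixP => i j; rewrite !mxE; case: eqP => [->|/eqP ne] //.
by rewrite H.
Qed.

Lemma smith_chain (S : comUnitRingType) n (D : 'M[S]_n) (N : 'I_n) :
  smith_form D -> (n.-1 = N)%N -> forall l : 'I_n, dvdr (D l l) (D N N).
Proof.
case=> _ H hN l.
have key : forall k (l : 'I_n), (l + k = n.-1)%N -> dvdr (D l l) (D N N).
  elim=> [|k IH] l' hl.
    have -> : l' = N by apply/val_inj; rewrite /= -hN -hl addn0.
    by exists 1; rewrite mul1r.
  have hl1 : (l'.+1 < n)%N by move: (ltn_ord l') hl; lia.
  have [c Hc] := IH (Ordinal hl1) ltac:(rewrite /= -hl; lia).
  have [c' Hc'] := H l' (Ordinal hl1) erefl.
  by exists (c * c'); rewrite Hc Hc' mulrA.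
apply: (key (n.-1 - l)%N); move: (ltn_ord l); lia.
Qed.

Lemma part1 (R : idomainType) (n : nat) (lam : 'rV[R]_n) :
     has_smith_form (diag_plus_tI lam) ->
     forall i j : 'I_n, lam 0 i - lam 0 j != 0 -> lam 0 i - lam 0 j \is a GRing.unit.
Proof.
rewrite diag_plus_tIE; set beta := \row_k _.
case=> P [Q [HP [HQ HD]]] i j dne.
set D := P *m _ *m Q in HD.
have n0 : (0 < n)%N := leq_ltn_trans (leq0n i) (ltn_ord i).
have hN : (n.-1 < n)%N by case: (n) n0.
pose N := Ordinal hN.
have Dd := smith_diag HD.
have ch := smith_chain HD (erefl : n.-1 = N).
set s := D N N.
have betaE k : beta 0 k = 'X + (lam 0 k)%:P by rewrite mxE.
have beta0 k : beta 0 k != 0 by rewrite betaE -size_poly_eq0 size_XaddC.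
have sroot k : s.[- lam 0 k] = 0.
  have : (\det D).[- lam 0 k] = 0.
    rewrite !det_mulmx det_diag !hornerM horner_prod (bigD1 k) //= betaE.
    by rewrite hornerD hornerX hornerC addNr !(mul0r, mulr0).
  rewrite {1}Dd det_diag horner_prod => /eqP/prodf_eq0 [l _].
  rewrite mxE => /eqP hl.
  by have [c hc] := ch l; rewrite /s hc hornerM hl mulr0.
have sfac k : exists g, s = g * beta 0 k.
  have /factor_theorem [g hg] : root s (- lam 0 k) by apply/eqP/sroot.
  by exists g; rewrite hg betaE polyCN opprK.
have PB : P *m diag_mx beta = D *m invmx Q by rewrite /D mulmxK.
have PPi := mulmxV HP.
have one : 1 = \sum_k P N k * invmx P k N.
  by move/matrixP: PPi => /(_ N N); rewrite !mxE eqxx.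
have hg k : exists g, s = g * beta 0 k /\ P N k = g * invmx Q N k.
  have [g hg] := sfac k; exists g; split => //.
  have e1 : (P *m diag_mx beta) N k = P N k * beta 0 k by rewrite mul_mx_diag mxE.
  have e2 : (diag_mx (\row_k D k k) *m invmx Q) N k = s * invmx Q N k.
    by rewrite mul_diag_mx mxE mxE.
  move/matrixP: PB => /(_ N k); rewrite e1 {1}Dd e2 hg.
  by rewrite mulrAC; apply: mulIf.
have gval k : forall g, s = g * beta 0 k -> exists y, g.[- lam 0 i] = (lam 0 i - lam 0 j) * y.
  move=> g hgk.
  have e0 l : (g * beta 0 k).[- lam 0 l] = g.[- lam 0 l] * (lam 0 k - lam 0 l).
    by rewrite hornerM betaE hornerD hornerX hornerC addrC.
  case: (eqVneq (lam 0 k) (lam 0 i)) => hk.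
    have : g.[- lam 0 j] = 0.
      move: (sroot j); rewrite hgk e0 hk => /eqP; rewrite mulf_eq0 (negPf dne) orbF.
      by move/eqP.
    move/eqP/factor_theorem => [h hh]; exists (- h.[- lam 0 i]).
    by rewrite hh hornerM hornerXsubC; ring.
  exists 0; move: (sroot i); rewrite hgk e0 => /eqP; rewrite mulf_eq0 subr_eq0 (negPf hk) orbF.
  by move/eqP->; rewrite mulr0.
have : 1 = (\sum_k P N k * invmx P k N).[- lam 0 i] by rewrite -one hornerC.
rewrite horner_sum.
have [z hz] : exists z, \sum_k (P N k * invmx P k N).[- lam 0 i] = (lam 0 i - lam 0 j) * z.
  apply: (big_ind (fun x => exists z, x = (lam 0 i - lam 0 j) * z)).
  - by exists 0; rewrite mulr0.
  - by move=> x y [a ->] [b ->]; exists (a + b); rewrite mulrDr.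
  move=> k _.
  have [g [h1 h2]] := hg k.
  have [y hy] := gval k g h1.
  exists (y * ((invmx Q N k).[- lam 0 i] * (invmx P k N).[- lam 0 i])).
  by rewrite h2 !hornerM hy; ring.
by rewrite hz => h; apply/unitrPr; exists z; rewrite -h.
Qed.
Section Emb.
Variable S : comUnitRingType.

Definition eqv n (A B : 'M[S]_n) :=
  exists P Q : 'M[S]_n, P \in unitmx /\ Q \in unitmx /\ P *m A *m Q = B.

Lemma eqv_trans n (A B C : 'M[S]_n) : eqv A B -> eqv B C -> eqv A C.
Proof.
case=> P [Q [hP [hQ e]]] [P' [Q' [hP' [hQ' e']]]].
exists (P' *m P), (Q *m Q'); rewrite !unitmx_mul hP hQ hP' hQ'; split => //; split => //.
by rewrite -e' -e !mulmxA.
Qed.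

Lemma eqv_smith n (A B : 'M[S]_n) : eqv A B -> smith_form B -> has_smith_form A.
Proof. by case=> P [Q [hP [hQ e]]] hB; exists P, Q; rewrite e. Qed.

Lemma sum2 n (i j : 'I_n) (F : 'I_n -> S) : i != j ->
  (forall k, k != i -> k != j -> F k = 0) -> \sum_k F k = F i + F j.
Proof.
move=> ij H; rewrite (bigD1 i) //= (bigD1 j) 1?eq_sym //= big1 ?addr0 // => k /andP [ki kj].
by apply: H.
Qed.

Definition embd n (i j : 'I_n) (a b c e : S) (g : 'I_n -> S) : 'M[S]_n :=
 \matrix_(r, s) if r == i then (if s == i then a else if s == j then b else 0)
   else if r == j then (if s == i then c else if s == j then e else 0)
   else (r == s)%:R * g r.

Lemma embd_mul n (i j : 'I_n) a b c e g a' b' c' e' h : i != j ->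
  embd i j a b c e g *m embd i j a' b' c' e' h =
  embd i j (a*a' + b*c') (a*b' + b*e') (c*a' + e*c') (c*b'+e*e') (fun k => g k * h k).
Proof.
move=> ij; apply/matrixP => r s; rewrite !mxE.
have ji : j != i by rewrite eq_sym.
have [->|ri] := eqVneq r i.
  rewrite (sum2 ij) ?eqxx ?(negPf ji) ?mxE ?eqxx ?(negPf ji).
    by case: (s == i); case: (s == j); ring.
  by move=> k ki kj; rewrite mxE eqxx (negPf ki) (negPf kj) mul0r.
have [->|rj] := eqVneq r j.
  rewrite (sum2 ij) ?eqxx ?(negPf ji) ?mxE ?eqxx ?(negPf ji).
    by case: (s == i); case: (s == j); ring.
  by move=> k ki kj; rewrite mxE eqxx (negPf ji) (negPf ki) (negPf kj) mul0r.
rewrite (bigD1 r) //= big1 ?addr0.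
  rewrite !mxE eqxx (negPf ri) (negPf rj) mul1r.
  by ring.
move=> k kr; rewrite !mxE (negPf ri) (negPf rj) eq_sym (negPf kr) mul0r.
by rewrite mul0r.
Qed.

Lemma embd_ext n (i j : 'I_n) a b c e g a' b' c' e' h :
  a = a' -> b = b' -> c = c' -> e = e' -> (forall k, k != i -> k != j -> g k = h k) ->
  embd i j a b c e g = embd i j a' b' c' e' h.
Proof.
move=> -> -> -> -> H; apply/matrixP => r s; rewrite !mxE.
have [//|ri] := eqVneq r i; have [//|rj] := eqVneq r j.
by rewrite H.
Qed.

Lemma diag_embd n (i j : 'I_n) (d : 'rV[S]_n) : i != j ->
  diag_mx d = embd i j (d 0 i) 0 0 (d 0 j) (fun k => d 0 k).
Proof.
move=> ij; have ji : j != i by rewrite eq_sym.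
apply/matrixP => r s; rewrite !mxE.
have [->|ri] := eqVneq r i.
  by rewrite eq_sym; case: (s == i) => //; case: (s == j).
have [->|rj] := eqVneq r j.
  have [->|si] := eqVneq s i; first by rewrite (negPf ji).
  by rewrite eq_sym; case: (s == j).
by rewrite mulrC mulr_natr.
Qed.

Lemma id_embd n (i j : 'I_n) : i != j -> 1%:M = embd i j 1 0 0 1 (fun _ => 1).
Proof.
move=> ij; have -> : (1%:M : 'M[S]_n) = diag_mx (const_mx 1).
  by apply/matrixP => r s; rewrite !mxE.
by rewrite (diag_embd (const_mx 1) ij); apply: embd_ext => *; rewrite ?mxE.
Qed.

Lemma pair_eqv n (i j : 'I_n) (d : 'rV[S]_n) (u v : S) : v = u + 1 -> i != j ->
  d 0 i = u -> d 0 j = v ->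
  eqv (diag_mx d) (diag_mx (\row_k (if k == i then 1 else if k == j then u * v else d 0 k))).
Proof.
move=> hv ij di dj.
have uP : embd i j (-1) 1 v (-u) (fun _ => 1) *m embd i j u 1 v 1 (fun _ => 1) = 1%:M.
  rewrite embd_mul // (id_embd ij); apply: embd_ext; rewrite ?hv; try ring.
  by move=> *; rewrite mulr1.
have uQ : embd i j 1 v 1 u (fun _ => 1) *m embd i j (-u) v 1 (-1) (fun _ => 1) = 1%:M.
  rewrite embd_mul // (id_embd ij); apply: embd_ext; rewrite ?hv; try ring.
  by move=> *; rewrite mulr1.
exists (embd i j (-1) 1 v (-u) (fun _ => 1)), (embd i j 1 v 1 u (fun _ => 1)).
split; first by case: (mulmx1_unit uP).
split; first by case: (mulmx1_unit uQ).
have ji : j != i by rewrite eq_sym.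
rewrite [in LHS](diag_embd d ij) (diag_embd (\row_k _) ij) !embd_mul // di dj.
apply: embd_ext; rewrite ?mxE ?eqxx ?(negPf ji) ?hv; try ring.
by move=> k ki kj; rewrite mxE (negPf ki) (negPf kj) mul1r mulr1.
Qed.


Lemma perm_eqv n (p : 'S_n) (d : 'rV[S]_n) :
  eqv (diag_mx d) (diag_mx (\row_k d 0 (p k))).
Proof.
exists (perm_mx p), (perm_mx p^-1); rewrite !unitmx_perm; split => //; split => //.
rewrite -row_permE -col_permE; apply/matrixP => r s; rewrite !mxE.
by rewrite (inj_eq perm_inj).
Qed.

Lemma diag_smith n (e : 'rV[S]_n) :
  (forall i j : 'I_n, nat_of_ord j = (nat_of_ord i).+1 -> dvdr (e 0 i) (e 0 j)) ->
  smith_form (diag_mx e).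
Proof.
move=> H; split.
  by move=> i j ij; rewrite mxE (negPf ij).
by move=> i j hij; rewrite !mxE !eqxx !mulr1n; apply: H.
Qed.

Definition rk (w uv : S) (x : S) : nat := if x == 1 then 0%N else if x == uv then 2%N else 1%N.

Lemma rk_dvd (w uv : S) x y : (exists c, uv = c * w) ->
  x \in [:: 1; w; uv] -> y \in [:: 1; w; uv] -> (rk w uv x <= rk w uv y)%N -> dvdr x y.
Proof.
move=> [c hc]; rewrite !inE /rk.
have [->|x1] := eqVneq x 1; first by move=> *; exists y; rewrite mulr1.
have [->|xuv] := eqVneq x uv.
  move=> _ _; case: (y == 1) => //; case/boolP: (y == uv) => [/eqP ->|] //.
  by move=> *; exists 1; rewrite mul1r.
rewrite /= orbF => /eqP -> /or3P [] /eqP ->; rewrite ?eqxx //.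
- by exists 1; rewrite mul1r.
- by exists c.
Qed.

Lemma sort_smith n (d : 'rV[S]_n) (w uv : S) : (exists c, uv = c * w) ->
  (forall k, d 0 k \in [:: 1; w; uv]) -> has_smith_form (diag_mx d).
Proof.
move=> hc hd.
pose leT := fun x y : S => (rk w uv x <= rk w uv y)%N.
pose t := [tuple d 0 k | k < n].
pose s := sort leT t.
have : perm_eq s t by rewrite perm_sort perm_refl.
case/tuple_permP => p hp.
apply: (eqv_smith (perm_eqv p d)); apply: diag_smith => i j hij.
have E (k : 'I_n) : nth 0 s k = d 0 (p k).
  by rewrite hp -tnth_nth !tnth_mktuple.
have srt : sorted leT s by apply: sort_sorted => x y; apply: leq_total.
have hs : size s = n by rewrite size_sort size_tuple.
move/sortedP: srt => /(_ 0 i); rewrite hs -hij ltn_ord => /(_ isT).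
rewrite !E !mxE; apply: rk_dvd => //.
Qed.


Lemma eqv_has n (A B : 'M[S]_n) : eqv A B -> has_smith_form B -> has_smith_form A.
Proof.
move=> hAB [P [Q [hP [hQ hB]]]].
have [P' [Q' [hP' [hQ' e]]]] := hAB.
exists (P *m P'), (Q' *m Q); rewrite !unitmx_mul hP hQ hP' hQ'; split => //; split => //.
by rewrite -e !mulmxA in hB *.
Qed.

Lemma no_pair (u v : S) n (d : 'rV[S]_n) :
  (forall k, d 0 k \in [:: 1; u; v; u * v]) ->
  (forall k, d 0 k != u) \/ (forall k, d 0 k != v) -> has_smith_form (diag_mx d).
Proof.
move=> hd [] hn.
  apply: (sort_smith (w := v) (uv := u * v)); first by exists u.
  move=> k; move: (hd k) (hn k); rewrite !inE.
  by case: (d 0 k == u); rewrite ?orbF ?orbT.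
apply: (sort_smith (w := u) (uv := u * v)); first by exists v; rewrite mulrC.
move=> k; move: (hd k) (hn k); rewrite !inE.
by case: (d 0 k == v); rewrite ?orbF ?orbT.
Qed.

Lemma pair_loop (u v : S) : v = u + 1 -> u != 1 -> u * v != u ->
  forall m n (d : 'rV[S]_n), leq #|[pred k | d 0 k == u]| m ->
  (forall k, d 0 k \in [:: 1; u; v; u * v]) -> has_smith_form (diag_mx d).
Proof.
move=> hv h1 h2; elim=> [|m IH] n d hc hd.
  apply: (no_pair hd); left => k; apply/negP => /eqP hk.
  have : leq 1 #|[pred k | d 0 k == u]| by apply/card_gt0P; exists k; rewrite inE hk.
  by move: hc; rewrite leqn0 => /eqP ->.
case/boolP: ([exists k, d 0 k == u] && [exists k, d 0 k == v]); last first.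
  rewrite negb_and => /orP [] /existsPn hn; apply: (no_pair hd); [left|right] => //.
case/andP => /existsP [i /eqP di] /existsP [j /eqP dj].
have uv : u != v by rewrite hv -subr_eq0 opprD addrA subrr add0r oppr_eq0 oner_eq0.
have ij : i != j by apply: contraNneq uv => eij; rewrite -di -dj eij.
apply: (eqv_has (pair_eqv hv ij di dj)); apply: IH.
  rewrite -ltnS; apply: leq_trans hc; apply: proper_card; apply/properP; split.
    apply/subsetP => k; rewrite !inE mxE.
    have [->|ki] := eqVneq k i; first by rewrite eq_sym (negPf h1).
    by have [->|kj] := eqVneq k j; first by rewrite (negPf h2).
  by exists i; rewrite !inE ?mxE ?eqxx ?di // eq_sym.
move=> k; rewrite mxE; case: eqP => _; first by rewrite !inE eqxx.
by case: eqP => _ //; rewrite !inE eqxx !orbT.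
Qed.

End Emb.
Lemma unit_int (x : int) : x \is a GRing.unit -> x = 1 \/ x = -1.
Proof. by rewrite [_ \is a _]/= => /orP [] /eqP; auto. Qed.

Lemma two_vals n (lam : 'rV[int]_n) :
  (forall i j : 'I_n, lam 0 i - lam 0 j != 0 -> lam 0 i - lam 0 j \is a GRing.unit) ->
  exists a : int, forall i : 'I_n, lam 0 i = a \/ lam 0 i = a + 1.
Proof.
move=> H.
have D i j : lam 0 i - lam 0 j = 0 \/ lam 0 i - lam 0 j = 1 \/ lam 0 i - lam 0 j = -1.
  have [e|ne] := eqVneq (lam 0 i - lam 0 j) 0; first by left.
  by right; apply: unit_int; apply: H.
case: n lam H D => [|n] lam H D; first by exists 0; case.
case/boolP: [exists k, lam 0 k == lam 0 ord0 - 1].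
  case/existsP => k /eqP hk; exists (lam 0 ord0 - 1) => i.
  have := D i ord0; have := D i k; rewrite hk; lia.
rewrite negb_exists => /forallP hk; exists (lam 0 ord0) => i.
have := D i ord0; have := hk i; move/eqP.
have := D ord0 i; lia.
Qed.

Theorem proposition8p9 :
  (forall (R : idomainType) (n : nat) (lam : 'rV[R]_n),
     has_smith_form (diag_plus_tI lam) ->
     forall i j : 'I_n, lam 0 i - lam 0 j != 0 -> lam 0 i - lam 0 j \is a GRing.unit)
  /\
  (forall (n : nat) (lam : 'rV[int]_n),
     has_smith_form (diag_plus_tI lam) <->
     exists a : int, forall i : 'I_n, lam 0 i = a \/ lam 0 i = a + 1).
Proof.
split; first exact: part1.
move=> n lam; split; first by move=> h; apply: two_vals; apply: part1.
case=> a Ha; rewrite diag_plus_tIE.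
pose u : {poly int} := 'X + a%:P.
have hv : 'X + (a + 1)%:P = u + 1 by rewrite /u polyCD addrA.
have u0 : u != 0 by rewrite -size_poly_eq0 size_XaddC.
have h1 : u != 1.
  by apply/eqP => e; move: (size_XaddC a); rewrite -/u e size_poly1.
have h2 : u * (u + 1) != u.
  by rewrite mulrDr mulr1 -subr_eq0 addrK mulf_eq0 orbb.
apply: (pair_loop (erefl (u + 1)) h1 h2 (m := n)).
  by apply: leq_trans (max_card _) _; rewrite card_ord.
move=> k; rewrite mxE !inE; case: (Ha k) => ->.
  by rewrite eqxx orbT.
by rewrite hv eqxx !orbT.
Qed.
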